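(* For every $d\ge 1$, the set $X=(L_0\cup L_d)\setminus\{[0,11\cdots1],[d,11\cdots1]\}$ is a mutual-visibility set of $\mathit{BF}(d)$. In particular $\mu(\mathit{BF}(d))\ge 2^{d+1}-2$.
   Context: Binary strings $c=c_0\cdots c_{d-1}$ have positions $0,\dots,d-1$ from the left; $c(i)$ is $c$ with bit $i$ complemented. $\mathit{BF}(d)$ has vertex set $\{[\ell,c]:\ell\in\{0,\dots,d\},\ c\in\{0,1\}^d\}$; for $\ell\in\{0,\dots,d-1\}$, $[\ell,c]$ is adjacent to $[\ell+1,c']$ iff $c'=c$ or $c'=c(\ell)$, and there are no other edges. $L_j=\{[j,c]:c\in\{0,1\}^d\}$ is level $j$. For a connected graph $G$ and $X\subseteq V(G)$, two vertices $x,y$ are $X$-visible if some shortest $x,y$-path has no internal vertex in $X$; $X$ is a mutual-visibility set if every two vertices of $X$ are $X$-visible; $\mu(G)$ is the maximum size of a mutual-visibility set. *)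

(* Defs.v *)
From Stdlib Require Import ClassicalEpsilon.
From mathcomp Require Import all_boot.
Set Implicit Arguments. Unset Strict Implicit. Unset Printing Implicit Defensive.

Section Visibility.
Variables (T : finType) (e : rel T).

Definition shortest_path (x y : T) (p : seq T) : Prop :=
  [/\ path e x p, last x p = y &
      forall q : seq T, path e x q -> last x q = y -> size p <= size q].

(* internal vertices of the path x :: p (p ends at the other end vertex) *)
Definition internal (p : seq T) : seq T := take (size p).-1 p.

Definition visible (X : {set T}) (x y : T) : Prop :=
  exists p, shortest_path x y p /\ {in internal p, forall z, z \notin X}.

Definition mutual_visibility_set (X : {set T}) : Prop :=
  forall x y, x \in X -> y \in X -> visible X x y.

Definition pbool (P : Prop) : bool :=
  if excluded_middle_informative P then true else false.

Definition mu : nat :=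
  \max_(S : {set T} | pbool (mutual_visibility_set S)) #|S|.
End Visibility.

Definition bf_vertex (d : nat) : finType := ('I_d.+1 * {ffun 'I_d -> bool})%type.

Definition flip_bit (d : nat) (c : {ffun 'I_d -> bool}) (i : nat) : {ffun 'I_d -> bool} :=
  [ffun j : 'I_d => if val j == i then ~~ c j else c j].

Definition bf_step (d : nat) (u v : bf_vertex d) : bool :=
  (val v.1 == (val u.1).+1) && ((v.2 == u.2) || (v.2 == flip_bit u.2 u.1)).

Definition bf_adj (d : nat) : rel (bf_vertex d) :=
  fun u v => bf_step u v || bf_step v u.

Definition all_ones (d : nat) : {ffun 'I_d -> bool} := [ffun => true].

Definition bf_X (d : nat) : {set bf_vertex d} :=
  [set v : bf_vertex d | ((val v.1 == 0) || (val v.1 == d)) && (v.2 != all_ones d)].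

(* Main.v *)
Require Import Defs.
From Stdlib Require Import ClassicalEpsilon.
From mathcomp Require Import all_boot zify.
Set Implicit Arguments. Unset Strict Implicit. Unset Printing Implicit Defensive.

Section BF.
Variable d : nat.
Notation V := (bf_vertex d).
Definition lev (v : V) : nat := nat_of_ord v.1.
Definition mk (l : nat) (w : {ffun 'I_d -> bool}) : V := (inord l, w).
Definition dist (a b : nat) := a - b + (b - a).

Lemma mk_lev v : mk (lev v) v.2 = v.
Proof. by case: v => a w; rewrite /mk /lev /= inord_val. Qed.

Lemma adj_lev u v : bf_adj u v -> lev v = (lev u).+1 \/ lev u = (lev v).+1.
Proof.
by rewrite /bf_adj /bf_step => /orP [/andP [/eqP h _] | /andP[/eqP h _]]; [left|right].
Qed.

Lemma walk_len p x : path (@bf_adj d) x p -> dist (lev x) (lev (last x p)) <= size p.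
Proof.
elim: p x => [|y p IH] x /=; first by rewrite /dist subnn.
move=> /andP [hxy hp]; move: (IH _ hp) (adj_lev hxy); rewrite /dist.
move: (lev x) (lev y) (lev (last y p)) (size p) => a b c n; lia.
Qed.

Lemma walk_via p x z : path (@bf_adj d) x p -> z \in x :: p ->
  dist (lev x) (lev z) + dist (lev z) (lev (last x p)) <= size p.
Proof.
elim: p x => [|y p IH] x /=.
  by rewrite inE => _ /eqP ->; rewrite /dist subnn.
move=> /andP [hxy hp]; rewrite inE => /orP [/eqP -> | hz].
  move: (walk_len hp) (adj_lev hxy); rewrite /dist.
  move: (lev x) (lev y) (lev (last y p)) (size p) => a b c n; lia.
move: (IH _ hp hz) (adj_lev hxy); rewrite /dist.
move: (lev x) (lev y) (lev z) (lev (last y p)) (size p) => a b e c n; lia.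
Qed.

Lemma step_bit u v (i : 'I_d) : bf_step u v -> u.2 i != v.2 i ->
  val i = lev u /\ lev v = (lev u).+1.
Proof.
rewrite /bf_step => /andP [/eqP hl /orP [/eqP e | /eqP e]]; first by rewrite e eqxx.
rewrite e /flip_bit ffunE; case: ifP => [/eqP -> _ | _]; last by rewrite eqxx.
by split.
Qed.

Lemma bit_change p x (i : 'I_d) : path (@bf_adj d) x p -> x.2 i != (last x p).2 i ->
  (exists2 z, z \in x :: p & lev z = val i) /\ (exists2 z, z \in x :: p & lev z = (val i).+1).
Proof.
elim: p x => [|y p IH] x /=; first by rewrite eqxx.
move=> /andP [hxy hp] hne.
case: (boolP (x.2 i == y.2 i)) => e.
  rewrite (eqP e) in hne; have [[z1 h1 l1] [z2 h2 l2]] := IH _ hp hne.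
  by split; [exists z1 | exists z2] => //; rewrite inE h1 orbT || rewrite inE h2 orbT.
case/orP: hxy => hs.
  have [h1 h2] := step_bit hs e.
  split; [exists x | exists y] => //; first [by rewrite ?h2 h1 | by rewrite !inE eqxx ?orbT].
have e' : y.2 i != x.2 i by rewrite eq_sym.
have [h1 h2] := step_bit hs e'.
split; [exists y | exists x] => //; first [by rewrite ?h2 h1 | by rewrite !inE eqxx ?orbT].
Qed.

Lemma step_mk l (w w' : {ffun 'I_d -> bool}) : l < d -> (forall j : 'I_d, val j != l -> w j = w' j) ->
  bf_step (mk l w) (mk l.+1 w').
Proof.
move=> hl hw; rewrite /bf_step /mk /= !inordK ?eqxx //=; try lia.
case: (boolP (w' == w)) => //= ne; apply/eqP/ffunP => j; rewrite /flip_bit ffunE.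
case: eqP => [hj | /eqP hj]; last by rewrite hw.
case: (boolP (w' j == w j)) => [/eqP ej | ].
  exfalso; move/eqP: ne; apply; apply/ffunP => k.
  case: (boolP (val k == l)) => hk; last by rewrite hw.
  by have -> : k = j by apply: val_inj; rewrite /= (eqP hk) hj.
by case: (w' j); case: (w j).
Qed.


Lemma path_map (G : nat -> V) s n :
  (forall k, s <= k < s + n -> bf_adj (G k) (G k.+1)) ->
  path (@bf_adj d) (G s) (map G (iota s.+1 n)).
Proof.
elim: n s => [|n IH] s h //=.
rewrite h; last by lia.
apply: IH => k hk; apply: h; lia.
Qed.

Lemma last_map (G : nat -> V) s n : last (G s) (map G (iota s.+1 n)) = G (s + n).
Proof.
elim: n s => [|n IH] s /=; first by rewrite addn0.
by rewrite IH addSnnS.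
Qed.

Lemma vis_of (G : nat -> V) n x y : G 0 = x -> G n = y ->
  (forall k, k < n -> bf_adj (G k) (G k.+1)) ->
  (forall q, path (@bf_adj d) x q -> last x q = y -> n <= size q) ->
  (forall k, 0 < k < n -> G k \notin bf_X d) ->
  visible (@bf_adj d) (bf_X d) x y.
Proof.
move=> <- <- hadj hmin hint; exists (map G (iota 1 n)); split.
  split; first by apply: path_map => k hk; apply: hadj; lia.
    by rewrite last_map.
  by move=> q hq hl; rewrite size_map size_iota; apply: hmin.
move=> z; rewrite /internal size_map size_iota -map_take take_iota => /mapP [k].
rewrite mem_iota => hk ->; apply: hint; lia.
Qed.

Lemma mk_X l w : l <= d -> (mk l w \in bf_X d) = ((l == 0) || (l == d)) && (w != all_ones d).
Proof. by move=> hl; rewrite inE /mk /= inordK. Qed.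

End BF.
Definition mix d l (a b : {ffun 'I_d -> bool}) : {ffun 'I_d -> bool} :=
  [ffun j : 'I_d => if j < l then b j else a j].

Ltac agr H := let j := fresh "j" in let hj := fresh "hj" in
  move=> j /= hj; rewrite !ffunE; do 2 (case: ifP => ?); rewrite ?ffunE //;
  first [ (exfalso; lia) | (apply: H; lia) | (symmetry; apply: H; lia) | idtac ].

Lemma lev_le d (x : bf_vertex d) : lev x <= d.
Proof. by rewrite /lev -ltnS ltn_ord. Qed.

Lemma case00 d (hd : 1 <= d) (x y : bf_vertex d) : lev x = 0 -> lev y = 0 ->
  x.2 != y.2 -> y.2 != all_ones d -> visible (@bf_adj d) (bf_X d) x y.
Proof.
move=> lx ly hne hcy.
have [i0 hi0] : exists i, x.2 i != y.2 i.
  apply/existsP; apply: contraR hne => /existsPn h; apply/eqP/ffunP => i.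
  by move: (h i); rewrite negbK => /eqP.
case: (@arg_maxnP _ i0 (fun i => x.2 i != y.2 i) (fun i : 'I_d => val i) hi0) => m hm hmax.
have hmax' : forall j : 'I_d, (m : nat) < j -> x.2 j = y.2 j.
  move=> j hj; apply/eqP; apply: contraTT hj => /hmax H; rewrite -leqNgt; exact: H.
have hmd : (m : nat) < d := ltn_ord m.
have [h hh] : exists h, h = (m : nat).+1 by eexists.
refine (@vis_of d (fun k => if k < h then mk k (mix k x.2 (all_ones d))
   else mk (2 * h - k) (mix (2 * h - k) y.2 (all_ones d))) (2 * h) x y _ _ _ _ _).
- have h0 : 0 < h by lia.
  rewrite /= h0 -{2}(mk_lev x) lx; congr mk; apply/ffunP => j; rewrite ffunE //.
- case: ifP => hk; first lia.
  rewrite subnn -{2}(mk_lev y) ly; congr mk; apply/ffunP => j; rewrite ffunE //.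
- move=> k hk; case: ifP => h1; case: ifP => h2.
  + apply/orP; left; apply: step_mk; first lia. agr hmax'.
  + apply/orP; left; have -> : 2 * h - k.+1 = k.+1 by lia.
    apply: step_mk; first lia. agr hmax'.
  + exfalso; lia.
  + apply/orP; right; have -> : 2 * h - k = (2 * h - k.+1).+1 by lia.
    apply: step_mk; first lia. agr hmax'.
- move=> q hq hl.
  have [_ [z hz lz]] : (exists2 z, z \in x :: q & lev z = val m) /\
     (exists2 z, z \in x :: q & lev z = (val m).+1).
    by apply: bit_change => //; rewrite hl.
  have := walk_via hq hz; rewrite hl lz lx ly /dist hh /=; lia.
- move=> k hk; case: ifP => h1; rewrite mk_X; try lia.
  apply/negP => /andP [/orP [] /eqP e /negP hw]; first lia.
  apply: hw; apply/eqP/ffunP => j; rewrite !ffunE e ltn_ord //.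
Qed.

Lemma casedd d (hd : 1 <= d) (x y : bf_vertex d) : lev x = d -> lev y = d ->
  x.2 != y.2 -> y.2 != all_ones d -> visible (@bf_adj d) (bf_X d) x y.
Proof.
move=> lx ly hne hcy.
have [i0 hi0] : exists i, x.2 i != y.2 i.
  apply/existsP; apply: contraR hne => /existsPn h; apply/eqP/ffunP => i.
  by move: (h i); rewrite negbK => /eqP.
case: (@arg_minnP _ i0 (fun i => x.2 i != y.2 i) (fun i : 'I_d => val i) hi0) => m hm hmin.
have hmin' : forall j : 'I_d, (j : nat) < m -> x.2 j = y.2 j.
  move=> j hj; apply/eqP; apply: contraTT hj => /hmin H; rewrite -leqNgt; exact: H.
have hmd : (m : nat) < d := ltn_ord m.
have [t ht] : exists t, t = d - m by eexists.
refine (@vis_of d (fun k => if k < t then mk (d - k) (mix (d - k) (all_ones d) x.2)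
   else mk (m + (k - t)) (mix (m + (k - t)) (all_ones d) y.2)) (2 * t) x y _ _ _ _ _).
- have h0 : 0 < t by lia.
  rewrite /= h0 subn0 -{2}(mk_lev x) lx; congr mk; apply/ffunP => j; rewrite ffunE ltn_ord //.
- case: ifP => hk; first lia.
  have -> : m + (2 * t - t) = d by lia.
  rewrite -{2}(mk_lev y) ly; congr mk; apply/ffunP => j; rewrite ffunE ltn_ord //.
- move=> k hk; case: ifP => h1; case: ifP => h2.
  + apply/orP; right; have -> : d - k = (d - k.+1).+1 by lia.
    apply: step_mk; first lia. agr hmin'.
  + apply/orP; right; have -> : d - k = (m + (k.+1 - t)).+1 by lia.
    apply: step_mk; first lia. agr hmin'.
  + exfalso; lia.
  + apply/orP; left; have -> : m + (k.+1 - t) = (m + (k - t)).+1 by lia.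
    apply: step_mk; first lia. agr hmin'.
- move=> q hq hl.
  have [[z hz lz] _] : (exists2 z, z \in x :: q & lev z = val m) /\
     (exists2 z, z \in x :: q & lev z = (val m).+1).
    by apply: bit_change => //; rewrite hl.
  have := walk_via hq hz; rewrite hl lz lx ly /dist ht /=; lia.
- move=> k hk; case: ifP => h1; rewrite mk_X; try lia.
  apply/negP => /andP [/orP [] /eqP e /negP hw]; last lia.
  apply: hw; apply/eqP/ffunP => j; rewrite !ffunE e ltn0 //.
Qed.

Lemma case0d d (hd : 1 <= d) (x y : bf_vertex d) : lev x = 0 -> lev y = d ->
  visible (@bf_adj d) (bf_X d) x y.
Proof.
move=> lx ly.
refine (@vis_of d (fun k => mk k (mix k x.2 y.2)) d x y _ _ _ _ _).
- rewrite -{2}(mk_lev x) lx; congr mk; apply/ffunP => j; rewrite ffunE //.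
- rewrite -{2}(mk_lev y) ly; congr mk; apply/ffunP => j; rewrite ffunE ltn_ord //.
- move=> k hk; apply/orP; left; apply: step_mk; first lia. agr I.
- move=> q hq hl; have := walk_len hq; rewrite hl lx ly /dist; lia.
- move=> k hk; rewrite mk_X; lia.
Qed.

Lemma cased0 d (hd : 1 <= d) (x y : bf_vertex d) : lev x = d -> lev y = 0 ->
  visible (@bf_adj d) (bf_X d) x y.
Proof.
move=> lx ly.
refine (@vis_of d (fun k => mk (d - k) (mix (d - k) y.2 x.2)) d x y _ _ _ _ _).
- rewrite subn0 -{2}(mk_lev x) lx; congr mk; apply/ffunP => j; rewrite ffunE ltn_ord //.
- rewrite subnn -{2}(mk_lev y) ly; congr mk; apply/ffunP => j; rewrite ffunE //.
- move=> k hk; apply/orP; right; have -> : d - k = (d - k.+1).+1 by lia.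
  apply: step_mk; first lia. agr I.
- move=> q hq hl; have := walk_len hq; rewrite hl lx ly /dist; lia.
- move=> k hk; rewrite mk_X; lia.
Qed.

Lemma vis_all d (hd : 1 <= d) : mutual_visibility_set (@bf_adj d) (bf_X d).
Proof.
move=> x y; rewrite !inE => /andP [hlx hcx] /andP [hly hcy].
have hlx' : (lev x == 0) || (lev x == d) by [].
have hly' : (lev y == 0) || (lev y == d) by [].
case: (eqVneq x y) => [<- | hne].
  exists [::]; split; first by split.
  by move=> z.
have hxy : lev x = lev y -> x.2 != y.2.
  move=> el; apply: contraNneq hne => e.
  by rewrite -(mk_lev x) -(mk_lev y) el e.
case/orP: hlx' => /eqP lx; case/orP: hly' => /eqP ly.
- by apply: case00 => //; apply: hxy; rewrite lx ly.
- exact: case0d.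
- exact: cased0.
- by apply: casedd => //; apply: hxy; rewrite lx ly.
Qed.

Lemma card_X d (hd : 1 <= d) : #|bf_X d| = 2 ^ d.+1 - 2.
Proof.
have -> : bf_X d = setX [set l : 'I_d.+1 | (val l == 0) || (val l == d)]
                        (~: [set all_ones d]).
  by apply/setP => v; rewrite !inE.
rewrite cardsX.
have -> : [set l : 'I_d.+1 | (val l == 0) || (val l == d)] = [set ord0; ord_max].
  apply/setP => l; rewrite !inE; congr orb; apply/eqP/eqP => [h|->] //;
  by apply: val_inj.
rewrite cards2.
have -> : (ord0 != ord_max :> 'I_d.+1) by apply/eqP => /(congr1 val) /=; lia.
have := cardsC [set all_ones d]; rewrite cards1 card_ffun card_bool card_ord.
rewrite expnS; lia.
Qed.

Theorem lemma5p2 (d : nat) (hd : 1 <= d) :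
  mutual_visibility_set (@bf_adj d) (bf_X d) /\
  2 ^ d.+1 - 2 <= mu (@bf_adj d).
Proof.
split; first exact: vis_all.
rewrite -card_X //; rewrite /mu.
apply: (@leq_bigmax_cond _ (fun S => pbool (mutual_visibility_set (@bf_adj d) S)) (fun S => #|S|)).
rewrite /pbool; case: excluded_middle_informative => // H; exfalso; apply: H; exact: vis_all.
Qed.
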